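(* The map sending a triple $(r,H,\mathbf S_r)$ with $0\le r\le m$, $H\in\mathcal G(m,r;2)$, $\mathbf S_r\in\mathrm{Sym}(r;2)$ to the row space $$\mathrm{rs}\Big[\ \mathbf I_{m|r}\mathbf P_{\mathcal I}^{T}\ \ \Big|\ \ (\mathbf I_{m|r}\tilde{\mathbf S}_r+\mathbf I_{m|-r})\mathbf P_{\mathcal I}^{-1}\ \Big]\subseteq\mathbb F_2^{2m}$$ (the row space of an $m\times 2m$ binary matrix) is a bijection from the set of such triples onto the set $\mathcal L(2m,m)$ of Lagrangian subspaces of $\mathbb F_2^{2m}$. In particular $|\mathcal L(2m,m)|=\prod_{i=1}^m(2^i+1)=\sum_{r=0}^m 2^{r(r+1)/2}\binom{m}{r}_2$.
   Context: Binary vectors are columns over $\mathbb F_2$; $\mathrm{Sym}(r;2)$ is the set of symmetric binary $r\times r$ matrices and $\mathcal G(m,r;2)$ the set of $r$-dimensional subspaces of $\mathbb F_2^m$; $\binom{m}{r}_2=|\mathcal G(m,r;2)|$. On $\mathbb F_2^{2m}$, viewing elements as pairs $(\mathbf a,\mathbf b)$ with $\mathbf a,\mathbf b\in\mathbb F_2^m$, the symplectic form is $\langle(\mathbf a,\mathbf b),(\mathbf c,\mathbf d)\rangle_s=\mathbf b^T\mathbf c+\mathbf a^T\mathbf d$. A Lagrangian subspace is an $m$-dimensional subspace $L$ with $\langle x,y\rangle_s=0$ for all $x,y\in L$. $\mathbf I_{m|r}$ is the $m\times m$ matrix with $\mathbf I_r$ in the upper-left corner and zeros elsewhere, $\mathbf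 I_{m|-r}=\mathbf I_m-\mathbf I_{m|r}$. Echelon data: for $0\le r\le m$ and $H\in\mathcal G(m,r;2)$, let $\mathbf H_{\mathcal I}$ be the unique $m\times r$ binary matrix in column reduced echelon form with column space $H$: there are indices $i_1<\dots<i_r$, $\mathcal I=\{i_1,\dots,i_r\}$, such that rows $i_1,\dots,i_r$ of $\mathbf H_{\mathcal I}$ form $\mathbf I_r$ and column $j$ of $\mathbf H_{\mathcal I}$ is zero in all rows above row $i_j$. Let $\mathbf I_{\mathcal I}$ (resp. $\mathbf I_{\tilde{\mathcal I}}$) be the $m\times r$ (resp. $m\times(m-r)$) matrix whose columns are the standard basis vectors $\mathbf e_i$ with $i\in\mathcal I$ (resp. $i\notin\mathcal I$), in increasing order of $i$. Put $\mathbf P_{\mathcal I}=[\mathbf H_{\mathcal I}\ \ \mathbf I_{\tilde{\mathcal I}}]\in\mathrm{GL}(m;2)$, and define the $m\times(m-r)$ matrix $\tilde{\mathbf H}_{\mathcal I}$ by $\mathbf P_{\mathcal I}^{-T}=[\mathbf I_{\mathcal I}\ \ \tilde{\mathbf H}_{\mathcal I}]$. (For $r=0$: $H=\{0\}$, $\mathbf P_{\mathcal I}=\mathbf I_m$.) For $\mathbf S_r\in\mathrm{Sym}(r;2)$, $\tilde{\mathbf S}_r\in\mathrm{Sym}(m;2)$ denotes the matrix with $\mathbf S_r$ as its upper-left $r\times r$ block and zeros elsewhere. *)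

(* Defs.v *)
(* Binary vectors are represented as ROW vectors of 'F_2
   (mxalgebra works with row spaces); a subspace of F_2^n is represented by
   its canonical square matrix <<A>>%MS, whose row space is the subspace. *)
From HB Require Import structures.
From mathcomp Require Import all_boot all_order all_algebra.
Set Implicit Arguments. Unset Strict Implicit. Unset Printing Implicit Defensive.
Import GRing.Theory.
Local Open Scope ring_scope.

Notation F2 := 'F_2.

Definition is_subspace n (A : 'M[F2]_n) : bool := (<<A>>%MS == A).

Definition grass n r : {set 'M[F2]_n} :=
  [set A | is_subspace A & \rank A == r].

Definition qbinom2 m r : nat := #|grass m r|.

Definition symp m (x y : 'rV[F2]_(m + m)) : F2 :=
  (rsubmx x *m (lsubmx y)^T + lsubmx x *m (rsubmx y)^T) 0 0.

Definition is_lagrangian m (L : 'M[F2]_(m + m)) : bool :=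
  [&& is_subspace L, \rank L == m &
      [forall x : 'rV[F2]_(m + m), forall y : 'rV[F2]_(m + m),
         ((x <= L)%MS && (y <= L)%MS) ==> (symp x y == 0)]].

Definition lagrangians m : {set 'M[F2]_(m + m)} := [set L | is_lagrangian L].

(* column reduced echelon form, with pivot rows f j = i_(j+1) *)
Definition is_cref m r (X : 'M[F2]_(m, r)) : bool :=
  [exists f : {ffun 'I_r -> 'I_m},
    [forall j : 'I_r, forall j' : 'I_r, (j < j')%N ==> (f j < f j')%N] &&
    [forall j : 'I_r,
       [forall j' : 'I_r, X (f j') j == (j == j')%:R] &&
       [forall k : 'I_m, (k < f j)%N ==> (X k j == 0)]]].

(* H_I : the m x r echelon matrix whose column space is the subspace H
   (H given by its row-space representative, so colspace X = H means
    rowspace X^T = H) *)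
Definition HI m r (H : 'M[F2]_m) : 'M[F2]_(m, r) :=
  odflt 0 [pick X : 'M[F2]_(m, r) | is_cref X && (X^T == H)%MS].

Definition lead m r (X : 'M[F2]_(m, r)) (j : 'I_r) : nat :=
  find (fun i : 'I_m => X i j != 0) (enum 'I_m).

Definition pivots m r (X : 'M[F2]_(m, r)) : seq nat :=
  [seq lead X j | j <- enum 'I_r].

Definition nonpivots m r (X : 'M[F2]_(m, r)) : seq nat :=
  [seq i <- iota 0 m | i \notin pivots X].

Definition Itil m r (H : 'M[F2]_m) : 'M[F2]_(m, m - r) :=
  \matrix_(i < m, j < m - r) (val i == nth m (nonpivots (HI r H)) j)%:R.

(* P_I = [H_I  I_{\tilde I}] as an m x m matrix (columns < r from H_I) *)
Definition PI m r (H : 'M[F2]_m) : 'M[F2]_m :=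
  \matrix_(i < m, j < m)
    match @insub nat (fun k => k < r)%N _ (val j) with
    | Some j' => HI r H i j'
    | None => (val i == nth m (nonpivots (HI r H)) (val j - r))%:R
    end.

Definition Stil m r (S : 'M[F2]_r) : 'M[F2]_m :=
  \matrix_(i < m, j < m)
    match @insub nat (fun k => k < r)%N _ (val i),
          @insub nat (fun k => k < r)%N _ (val j) with
    | Some i', Some j' => S i' j'
    | _, _ => 0
    end.

Definition lag_mx m r (H : 'M[F2]_m) (S : 'M[F2]_r) : 'M[F2]_(m, m + m) :=
  row_mx ((pid_mx r : 'M[F2]_m) *m (PI r H)^T)
         (((pid_mx r : 'M[F2]_m) *m Stil m S + copid_mx r) *m invmx (PI r H)).

Definition triple m := {r : 'I_m.+1 & ('M[F2]_m * 'M[F2]_r)%type}.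

Definition valid_triple m (t : triple m) : bool :=
  [&& ((tagged t).1 \in grass m (tag t)) & ((tagged t).2^T == (tagged t).2)].

Definition triples m : {set triple m} := [set t | valid_triple t].

Definition lag_map m (t : triple m) : 'M[F2]_(m + m) :=
  (<< lag_mx (tagged t).1 (tagged t).2 >>)%MS.

(* Main.v *)
Require Import Defs.
From mathcomp Require Import all_boot all_order all_algebra.
From mathcomp Require Import zify.
Import GRing.Theory.
Set Implicit Arguments. Unset Strict Implicit. Unset Printing Implicit Defensive.

Local Open Scope ring_scope.


Lemma F2_cases (x : F2) : x = 0 \/ x = 1.
Proof. by case: x => [[|[|n]] //= Hn]; [left|right]; apply/val_inj. Qed.
Lemma F2_nz (x : F2) : x != 0 -> x = 1.
Proof. by case: (F2_cases x) => ->. Qed.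
Lemma F2_opp (x : F2) : - x = x.
Proof. by case: (F2_cases x) => ->; [rewrite oppr0| apply/val_inj]. Qed.
Lemma mxF2_opp m n (A : 'M[F2]_(m,n)) : - A = A.
Proof. by apply/matrixP => i j; rewrite mxE F2_opp. Qed.
Lemma mxF2_add0 m n (A B : 'M[F2]_(m,n)) : A + B = 0 -> A = B.
Proof. by move/eqP; rewrite addr_eq0 mxF2_opp => /eqP. Qed.

Definition Jm m : 'M[F2]_(m + m) := block_mx 0 1%:M 1%:M 0.

Lemma Jm_invol m : Jm m *m Jm m = 1%:M.
Proof.
by rewrite /Jm mulmx_block !mulmx0 !mul0mx !mulmx1 !addr0 !add0r scalar_mx_block.
Qed.

Lemma symp_J m (x y : 'rV[F2]_(m + m)) : symp x y = (x *m Jm m *m y^T) 0 0.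
Proof.
rewrite /symp -[x](hsubmxK x) -[y](hsubmxK y) !row_mxKl !row_mxKr.
rewrite /Jm mul_row_block !mulmx0 !mulmx1 !addr0 !add0r tr_row_mx mul_row_col.
by [].
Qed.

Lemma entry_rows p q n (A : 'M[F2]_(p, n)) (B : 'M[F2]_(q, n)) i j :
  (A *m B^T) i j = (row i A *m (row j B)^T) 0 0.
Proof. by rewrite !mxE; apply: eq_bigr => k _; rewrite !mxE. Qed.

Lemma lag_iso m (L : 'M[F2]_(m + m)) : is_lagrangian L -> L *m Jm m *m L^T = 0.
Proof.
case/and3P => _ _ /forallP H; apply/matrixP => i j.
rewrite entry_rows row_mul -symp_J mxE.
by move: (H (row i L)) => /forallP /(_ (row j L)); rewrite !row_sub /= => /eqP.
Qed.

Lemma rank_JM m n (A : 'M[F2]_(m + m, n)) : \rank (Jm m *m A) = \rank A.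
Proof.
apply/eqP; rewrite eqn_leq mxrankM_maxr /=.
by rewrite -{1}[A]mul1mx -Jm_invol -mulmxA mxrankM_maxr.
Qed.

Lemma lag_char m (L : 'M[F2]_(m + m)) : is_lagrangian L ->
  forall p (v : 'M[F2]_(p, m + m)), (v <= L)%MS = (v *m Jm m *m L^T == 0).
Proof.
move=> HL p v; have iso := lag_iso HL.
case/and3P: HL => _ /eqP rL _.
set K := kermx (Jm m *m L^T).
have LK : (L <= K)%MS by rewrite sub_kermx mulmxA iso.
have rK : \rank K = m by rewrite mxrank_ker rank_JM mxrank_tr rL addnK.
have KL : (K <= L)%MS.
  by rewrite -(mxrank_leqif_sup LK) rK rL.
apply/idP/idP => [vL|].
  by rewrite -mulmxA -sub_kermx (submx_trans vL LK).
by rewrite -mulmxA -sub_kermx => vK; apply: submx_trans vK KL.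
Qed.


Definition pb m (I : {set 'I_m}) (V : 'M[F2]_m) :=
  [/\ (forall k, k \notin I -> row k V = 0),
      (forall k k', k \in I -> k' \in I -> V k k' = (k == k')%:R) &
      (forall k (i : 'I_m), k \in I -> (i < k)%N -> V k i = 0)].

Lemma pb_step m (A : 'M[F2]_m) (w : 'rV[F2]_m) I V :
  pb I V -> (V == A)%MS -> exists I' V', pb I' V' /\ (V' == (w + A))%MS.
Proof.
move=> [pb1 pb2 pb3] /andP[VA AV].
have Vk0 k i : k \notin I -> V k i = 0.
  by move=> kI; move/matrixP: (pb1 k kI) => /(_ 0 i); rewrite !mxE.
set w' := w - \sum_(k in I) w 0 k *: row k V.
have w'I k' : k' \in I -> w' 0 k' = 0.
  move=> k'I; rewrite !mxE summxE (bigD1 k') //= big1 ?addr0.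
    by rewrite !mxE pb2 // eqxx mulr1 subrr.
  by move=> k /andP[kI nk]; rewrite !mxE pb2 // (negPf nk) mulr0.
have SV : ((\sum_(k in I) w 0 k *: row k V)%R <= V)%MS.
  by apply: summx_sub => k _; rewrite scalemx_sub // row_sub.
have AwA : (A <= w + A)%MS by rewrite addsmxSr.
have w'wA : (w' <= w + A)%MS.
  by rewrite addmx_sub ?addsmxSl // eqmx_opp (submx_trans SV) // (submx_trans VA).
have [w'0|nzw'] := eqVneq w' 0.
  exists I, V; split => //; apply/andP; split.
    exact: submx_trans VA AwA.
  rewrite addsmx_sub AV andbT.
  have -> : w = w' + \sum_(k in I) w 0 k *: row k V by rewrite subrK.
  by rewrite w'0 add0r.
have [i0 Hi0] : exists i, w' 0 i != 0 by apply/rV0Pn.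
case: (@arg_minnP _ i0 (fun i => w' 0 i != 0) (fun i => val i) Hi0) => p Hp pmin.
have w'p : w' 0 p = 1 by apply: F2_nz.
have pI : p \notin I by apply/negP => /w'I; apply/eqP.
have w'lt (i : 'I_m) : (i < p)%N -> w' 0 i = 0.
  by move=> ip; apply/eqP; apply: contraLR ip; rewrite -leqNgt => /pmin.
pose V' := \matrix_(k, i) (if k == p then w' 0 i else V k i - V k p * w' 0 i).
have rowV' k : row k V' = if k == p then w' else row k V - V k p *: w'.
  apply/rowP => i; rewrite !mxE; case: eqP => _; rewrite ?mxE //.
exists (p |: I), V'; split.
  split.
  - move=> k; rewrite in_setU1 negb_or => /andP[kp kI].
    by rewrite rowV' (negPf kp) pb1 // (Vk0 _ _ kI) scale0r subr0.
  - move=> k k' kI' k'I'; rewrite /V' mxE.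
    have [-> | kp] := eqVneq k p.
      rewrite ?eqxx; have [-> | k'p] := eqVneq k' p; first by rewrite w'p.
      have k'I : k' \in I by move: k'I'; rewrite in_setU1 (negPf k'p).
      by rewrite w'I // eq_sym (negPf k'p).
    have kI : k \in I by move: kI'; rewrite in_setU1 (negPf kp).
    rewrite ?(negPf kp).
    have [-> | k'p] := eqVneq k' p; first by rewrite w'p mulr1 subrr (negPf kp).
    have k'I : k' \in I by move: k'I'; rewrite in_setU1 (negPf k'p).
    by rewrite w'I // mulr0 subr0 pb2.
  - move=> k i; rewrite in_setU1 => /orP[/eqP->|kI] ik; rewrite /V' mxE.
      by rewrite ?eqxx w'lt.
    have kp : (k == p) = false by apply/negP => /eqP E; rewrite -E kI in pI.
    rewrite kp pb3 //; case: (ltngtP p k) => [pk|kp'|/val_inj E].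
    - by rewrite pb3 // mul0r subr0.
    - by rewrite w'lt ?mulr0 ?subr0 // (ltn_trans ik).
    - by rewrite E eqxx in kp.
apply/andP; split.
  apply/row_subP => k; rewrite rowV'; case: eqP => _ //.
  rewrite addmx_sub // ?eqmx_opp ?scalemx_sub //.
  by apply: submx_trans AwA; apply: submx_trans VA; apply: row_sub.
have w'V' : (w' <= V')%MS.
  have E : row p V' = w' by rewrite rowV' eqxx.
  by rewrite -E row_sub.
have VV' : (V <= V')%MS.
  apply/row_subP => k; have [kI|kI] := boolP (k \in I).
    have kp : (k == p) = false by apply/negP => /eqP E; rewrite -E kI in pI.
    have -> : row k V = row k V' + V k p *: w' by rewrite rowV' kp subrK.
    by rewrite addmx_sub ?row_sub ?scalemx_sub.
  by rewrite pb1 // sub0mx.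
rewrite addsmx_sub (submx_trans AV VV') andbT.
have -> : w = w' + \sum_(k in I) w 0 k *: row k V by rewrite subrK.
by rewrite addmx_sub // (submx_trans SV VV').
Qed.

Definition spF m (s : seq 'rV[F2]_m) : 'M[F2]_m := foldr (fun w A => (w + A)%MS) 0 s.

Lemma pb_exists m (s : seq 'rV[F2]_m) : exists I V, pb I V /\ (V == spF s)%MS.
Proof.
elim: s => [|w s [I [V [pbIV VS]]]].
  exists set0, 0; split; last by rewrite /= !sub0mx.
  by split => [k _|k k'|k i]; rewrite ?in_set0 // row0.
exact: pb_step pbIV VS.
Qed.

Lemma spF_ge m (s : seq 'rV[F2]_m) x : x \in s -> (x <= spF s)%MS.
Proof.
elim: s => // w s IH; rewrite in_cons => /orP[/eqP->|xs] /=.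
  exact: addsmxSl.
exact: submx_trans (IH xs) (addsmxSr _ _).
Qed.

Lemma spF_le m (s : seq 'rV[F2]_m) n (B : 'M[F2]_(n, m)) :
  (forall x, x \in s -> (x <= B)%MS) -> (spF s <= B)%MS.
Proof.
elim: s => [|w s IH] H /=; first exact: sub0mx.
rewrite addsmx_sub H ?mem_head //; apply: IH => x xs; apply: H.
by rewrite in_cons xs orbT.
Qed.

Lemma pb_existsH m (H : 'M[F2]_m) : exists I V, pb I V /\ (V == H)%MS.
Proof.
have [I [V [pbIV /andP[VS SV]]]] := pb_exists [seq row i H | i <- enum 'I_m].
exists I, V; split => //; apply/andP; split.
  apply: submx_trans VS _; apply: spF_le => x /mapP[i _ ->]; exact: row_sub.
apply: submx_trans SV; apply/row_subP => i; apply: spF_ge.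
by apply/mapP; exists i; rewrite ?mem_enum.
Qed.

Lemma enum_val_mono m (I : {set 'I_m}) (j j' : 'I_#|I|) :
  (j < j')%N -> (enum_val j < enum_val j')%N.
Proof.
move=> jj'; set x := enum_val j.
have inc : sorted ltn (map val (enum I)).
  rewrite -[enum _](eq_filter (mem_enum _)).
  rewrite -(eq_filter (mem_map val_inj _)) -filter_map.
  by rewrite (sorted_filter ltn_trans) // unlock val_ord_enum iota_ltn_sorted.
have sz : size (map val (enum I)) = #|I| by rewrite size_map cardE.
rewrite /x !(enum_val_nth x) -!(nth_map x (val x)) ?cardE -?cardE //.
by apply: (sorted_ltn_nth ltn_trans) => //; rewrite inE sz.
Qed.

Lemma cref_exists m r (H : 'M[F2]_m) : \rank H = r ->
  exists X : 'M[F2]_(m, r), is_cref X && (X^T == H)%MS.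
Proof.
move=> rH; have [I [V [[pb1 pb2 pb3] /andP[VH HV]]]] := pb_existsH H.
pose X := \matrix_(i < m, j < #|I|) V (enum_val j) i.
have XTV : (X^T <= V)%MS.
  apply/row_subP => j.
  have -> : row j X^T = row (enum_val j) V by apply/rowP => i; rewrite !mxE.
  exact: row_sub.
have VXT : (V <= X^T)%MS.
  apply/row_subP => k; have [kI|kI] := boolP (k \in I); last by rewrite pb1 // sub0mx.
  have -> : row k V = row (enum_rank_in kI k) X^T.
    by apply/rowP => i; rewrite !mxE enum_rankK_in.
  exact: row_sub.
have XH : (X^T == H)%MS by rewrite (submx_trans XTV VH) (submx_trans HV VXT).
have rX : \rank X^T = #|I|.
  apply/eqP; rewrite eqn_leq rank_leq_row /=.
  pose E := \matrix_(i < m, j < #|I|) (i == enum_val j)%:R : 'M[F2]_(m, #|I|).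
  have XE : X^T *m E = 1%:M.
    apply/matrixP => j j'; rewrite !mxE (bigD1 (enum_val j')) //= big1 ?addr0.
      by rewrite !mxE eqxx mulr1 pb2 ?enum_valP // (inj_eq enum_val_inj).
    by move=> i /negPf ni; rewrite !mxE ni mulr0.
  by rewrite -{1}(mxrank1 F2 #|I|) -XE mxrankM_maxl.
have e : #|I| = r by rewrite -rX -rH; apply: eqmx_rank.
rewrite -e; exists X; rewrite XH andbT.
apply/existsP; exists [ffun j => enum_val j]; apply/andP; split.
  apply/forallP => j; apply/forallP => j'; apply/implyP => jj'.
  by rewrite !ffunE enum_val_mono.
apply/forallP => j; apply/andP; split.
  apply/forallP => j'; rewrite !ffunE !mxE pb2 ?enum_valP //.
  by rewrite (inj_eq enum_val_inj).
apply/forallP => k; apply/implyP; rewrite ffunE => kj; by rewrite mxE pb3 ?enum_valP.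
Qed.


Lemma HI_spec m r (H : 'M[F2]_m) : \rank H = r ->
  is_cref (HI r H) && ((HI r H)^T == H)%MS.
Proof.
move=> rH; rewrite /HI; case: pickP => [X HX //|none].
by have [X HX] := cref_exists rH; rewrite none in HX.
Qed.

Lemma cref_f m r (X : 'M[F2]_(m, r)) : is_cref X ->
  exists f : 'I_r -> 'I_m,
    [/\ forall j j' : 'I_r, (j < j')%N -> (f j < f j')%N,
        forall j j', X (f j') j = (j == j')%:R &
        forall j (k : 'I_m), (k < f j)%N -> X k j = 0].
Proof.
case/existsP => g /andP[/forallP inc /forallP pv].
exists (fun j => g j); split.
- by move=> j j' jj'; move/forallP: (inc j) => /(_ j') /implyP; apply.
- by move=> j j'; case/andP: (pv j) => /forallP /(_ j') /eqP.
- by move=> j k kj; case/andP: (pv j) => _ /forallP /(_ k) /implyP /(_ kj) /eqP.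
Qed.

Lemma f_inj m r (f : 'I_r -> 'I_m) :
  (forall j j' : 'I_r, (j < j')%N -> (f j < f j')%N) -> injective f.
Proof.
move=> inc j j' E; apply: val_inj; case: (ltngtP j j') => // [jj'|jj'].
  by have := inc _ _ jj'; rewrite E ltnn.
by have := inc _ _ jj'; rewrite E ltnn.
Qed.

Lemma lead_eq m r (X : 'M[F2]_(m, r)) (f : 'I_r -> 'I_m) :
  (forall j j', X (f j') j = (j == j')%:R) ->
  (forall j (k : 'I_m), (k < f j)%N -> X k j = 0) ->
  forall j, lead X j = f j.
Proof.
move=> pv z j; rewrite /lead; set p := (fun i : 'I_m => X i j != 0).
have Xfj : X (f j) j = 1 by rewrite pv eqxx.
have hs : has p (enum 'I_m).
  by apply/hasP; exists (f j); rewrite ?mem_enum //= /p Xfj oner_eq0.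
have := hs; rewrite has_find size_enum_ord => fm.
case: (ltngtP (find p (enum 'I_m)) (f j)) => // [lt|gt].
  have := nth_find (f j) hs; rewrite /p.
  by rewrite z ?eqxx // nth_enum_ord.
have := before_find (f j) gt; rewrite nth_ord_enum /p Xfj.
by rewrite oner_eq0.
Qed.


Lemma PI_facts m r (H : 'M[F2]_m) : \rank H = r ->
  (PI r H \in unitmx) /\ ((HI r H)^T = (pid_mx r : 'M[F2]_(r, m)) *m (PI r H)^T).
Proof.
move=> rH; have rm : (r <= m)%N by rewrite -rH rank_leq_col.
have /andP[cX XH] := HI_spec rH.
have PE_lt (i j : 'I_m) (j' : 'I_r) : val j = val j' -> PI r H i j = HI r H i j'.
  move=> Ej; rewrite /PI mxE; case: insubP => [u ur Eu|]; last by rewrite Ej ltn_ord.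
  by congr (HI r H i _); apply: val_inj; rewrite Eu.
have PE_ge (i j : 'I_m) : ~~ (j < r)%N ->
    PI r H i j = (val i == nth m (nonpivots (HI r H)) (j - r))%:R.
  by move=> jr; rewrite /PI mxE; case: insubP => [u ur Eu|//]; rewrite ur in jr.
set X := HI r H in cX XH PE_lt PE_ge *.
set P := PI r H in PE_lt PE_ge *.
have [f [inc pv z]] := cref_f cX.
have lf := lead_eq pv z.
have piv : pivots X = [seq val (f j) | j <- enum 'I_r].
  by rewrite /pivots; apply: eq_map => j; rewrite lf.
have szp : size (pivots X) = r by rewrite piv size_map size_enum_ord.
have uniqp : uniq (pivots X).
  rewrite piv map_inj_uniq ?enum_uniq // => j j' /val_inj; exact: f_inj.
set np := nonpivots X.
have sznp : size np = (m - r)%N.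
  rewrite /np /nonpivots size_filter.
  have := count_predC (mem (pivots X)) (iota 0 m); rewrite size_iota.
  have -> : count (mem (pivots X)) (iota 0 m) = r.
    rewrite -size_filter -[in RHS]szp; apply: perm_size; apply: uniq_perm.
    - by rewrite filter_uniq ?iota_uniq.
    - exact: uniqp.
    move=> x; rewrite mem_filter /=; case: (boolP (x \in pivots X)) => //= xp.
    rewrite mem_iota /=; rewrite piv in xp; case/mapP: xp => j _ ->; exact: ltn_ord.
  by move=> E; rewrite -[in RHS]E addKn.
have dnp (i : 'I_m) : val i \notin pivots X -> ((delta_mx 0 i : 'rV[F2]_m) <= P^T)%MS.
  move=> ip; have inp : val i \in np by rewrite mem_filter ip mem_iota /= ltn_ord.
  set k := index (val i) np; have kl : (k < m - r)%N by rewrite -sznp index_mem.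
  have jm : (r + k < m)%N by lia.
  apply: (@eq_row_sub _ _ _ _ _ (Ordinal jm)).
  apply/rowP => i'; rewrite [LHS]mxE [LHS]mxE PE_ge /=; last by lia.
  rewrite mxE.
  by rewrite addKn nth_index // eq_sym.
have dp (j : 'I_r) : ((delta_mx 0 (f j) : 'rV[F2]_m) <= P^T)%MS.
  have jm : (j < m)%N by apply: leq_trans (ltn_ord j) rm.
  set x := row (Ordinal jm) P^T.
  have xk k : x 0 k = X k j by rewrite [LHS]mxE [LHS]mxE (PE_lt _ _ j).
  set rest := (\sum_(k | k != f j) x 0 k *: delta_mx 0 k : 'rV[F2]_m).
  have E : x = delta_mx 0 (f j) + rest.
    by rewrite {1}(row_sum_delta x) (bigD1 (f j)) //= xk pv eqxx scale1r.
  have -> : delta_mx 0 (f j) = x - rest by rewrite E addrK.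
  rewrite addmx_sub ?row_sub // eqmx_opp summx_sub // => k kfj.
  case: (boolP (val k \in pivots X)) => kp; last by rewrite scalemx_sub ?dnp.
  rewrite piv in kp; case/mapP: kp => j' _ /val_inj Ek.
  by rewrite xk Ek pv; case: eqP => [Ej|]; [rewrite Ej -Ek eqxx in kfj | rewrite scale0r sub0mx].
have dall (i : 'I_m) : ((delta_mx 0 i : 'rV[F2]_m) <= P^T)%MS.
  case: (boolP (val i \in pivots X)) => ip; last exact: dnp.
  by rewrite piv in ip; case/mapP: ip => j _ /val_inj ->.
split.
  rewrite -unitmx_tr -row_full_unit -sub1mx; apply/row_subP => i.
  by rewrite row1 dall.
apply/matrixP => j i; rewrite !mxE (bigD1 (widen_ord rm j)) //= big1 ?addr0.
  by rewrite [X in X * _]mxE /= eqxx ltn_ord mul1r mxE (PE_lt _ _ j).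
move=> k /negPf kj; rewrite !mxE.
have -> : (val j == val k) = false.
  by apply/negP => /eqP E; move: kj; rewrite -val_eqE /= E eqxx.
by rewrite mul0r.
Qed.


Lemma pidM_E m n r (A : 'M[F2]_(m, n)) i j :
  (pid_mx r *m A : 'M[F2]_(m, n)) i j = if (i < r)%N then A i j else 0.
Proof.
rewrite mxE (bigD1 i) //= big1 ?addr0 => [|k /negPf ki].
  by rewrite mxE eqxx /=; case: (i < r)%N; rewrite ?mul1r ?mul0r.
by rewrite mxE; case: eqP => [/val_inj E|_]; [move: ki; rewrite E eqxx | rewrite mul0r].
Qed.

Lemma Mpid_E m n r (A : 'M[F2]_(m, n)) i j :
  (A *m pid_mx r : 'M[F2]_(m, n)) i j = if (j < r)%N then A i j else 0.
Proof.
rewrite mxE (bigD1 j) //= big1 ?addr0 => [|k /negPf kj].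
  by rewrite mxE eqxx /=; case: (j < r)%N; rewrite ?mulr1 ?mulr0.
by rewrite mxE; case: eqP => [/val_inj E|_]; [move: kj; rewrite E eqxx | rewrite mulr0].
Qed.

Lemma StilE m r (S : 'M[F2]_r) (i j : 'I_m) :
  Stil m S i j = match insub (val i), insub (val j) with
                 | Some i', Some j' => S i' j' | _, _ => 0 end.
Proof. by rewrite /Stil mxE. Qed.

Lemma Stil_lt m r (S : 'M[F2]_r) (i j : 'I_m) (i' j' : 'I_r) :
  val i = val i' -> val j = val j' -> Stil m S i j = S i' j'.
Proof.
move=> Ei Ej; rewrite StilE; case: insubP => [u _ Eu|]; last by rewrite Ei ltn_ord.
case: insubP => [v _ Ev|]; last by rewrite Ej ltn_ord.
by congr (S _ _); apply: val_inj; rewrite ?Eu ?Ev.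
Qed.

Lemma Stil_ge m r (S : 'M[F2]_r) (i j : 'I_m) :
  ~~ (i < r)%N || ~~ (j < r)%N -> Stil m S i j = 0.
Proof.
rewrite StilE; case: insubP => [u ur _|//]; case: insubP => [v vr _|//].
by rewrite ur vr.
Qed.

Lemma pid_Stil m r (S : 'M[F2]_r) : pid_mx r *m Stil m S = Stil m S.
Proof.
apply/matrixP => i j; rewrite pidM_E; case: ifP => // ir.
by rewrite Stil_ge // ir.
Qed.

Lemma Stil_pid m r (S : 'M[F2]_r) : Stil m S *m pid_mx r = Stil m S.
Proof.
apply/matrixP => i j; rewrite Mpid_E; case: ifP => // jr.
by rewrite Stil_ge // jr orbT.
Qed.

Lemma Stil_copid m r (S : 'M[F2]_r) : Stil m S *m copid_mx r = 0.
Proof. by rewrite /copid_mx mulmxBr mulmx1 Stil_pid subrr. Qed.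

Lemma tr_Stil m r (S : 'M[F2]_r) : (Stil m S)^T = Stil m S^T.
Proof.
apply/matrixP => i j; rewrite mxE !StilE.
by case: (insub (val i)) => [i'|]; case: (insub (val j)) => [j'|]; rewrite ?mxE.
Qed.

Lemma Stil_inj m r (S1 S2 : 'M[F2]_r) : (r <= m)%N -> Stil m S1 = Stil m S2 -> S1 = S2.
Proof.
move=> rm E; apply/matrixP => i j.
by move/matrixP: E => /(_ (widen_ord rm i) (widen_ord rm j)); rewrite (@Stil_lt _ _ S1 _ _ i j) // (@Stil_lt _ _ S2 _ _ i j).
Qed.

Definition lagP m r (P : 'M[F2]_m) (S : 'M[F2]_r) : 'M[F2]_(m, m + m) :=
  row_mx ((pid_mx r : 'M[F2]_m) *m P^T)
         (((pid_mx r : 'M[F2]_m) *m Stil m S + copid_mx r) *m invmx P).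

Lemma lag_mx_P m r (H : 'M[F2]_m) (S : 'M[F2]_r) : lag_mx H S = lagP (PI r H) S.
Proof. by []. Qed.

Definition Kp m r (P : 'M[F2]_m) : 'M[F2]_(m + m, m) :=
  col_mx (invmx P)^T (P *m copid_mx r).

Lemma lagP_K m r (P : 'M[F2]_m) (S : 'M[F2]_r) : (r <= m)%N -> P \in unitmx ->
  lagP P S *m Kp r P = 1%:M.
Proof.
move=> rm uP; rewrite /lagP /Kp mul_row_col -mulmxA -trmx_mul mulVmx //.
rewrite trmx1 mulmx1 -mulmxA (mulmxA (invmx P)) mulVmx // mul1mx.
rewrite mulmxDl -mulmxA Stil_copid mulmx0 add0r copid_mx_id //.
by rewrite /copid_mx addrC subrK.
Qed.

Lemma lagP_rank m r (P : 'M[F2]_m) (S : 'M[F2]_r) : (r <= m)%N -> P \in unitmx ->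
  \rank (lagP P S) = m.
Proof.
move=> rm uP; apply/eqP; rewrite eqn_leq rank_leq_row /=.
by rewrite -{1}(mxrank1 F2 m) -(lagP_K S rm uP) mxrankM_maxl.
Qed.

Lemma lagP_J m r (P : 'M[F2]_m) (S : 'M[F2]_r) : (r <= m)%N -> P \in unitmx ->
  lagP P S *m Jm m *m (lagP P S)^T = Stil m S + (Stil m S)^T.
Proof.
move=> rm uP.
have E : ((pid_mx r : 'M[F2]_m) *m Stil m S + copid_mx r) *m invmx P
           *m ((pid_mx r : 'M[F2]_m) *m P^T)^T = Stil m S.
  rewrite trmx_mul trmxK tr_pid_mx -mulmxA (mulmxA (invmx P)) mulVmx // mul1mx.
  by rewrite mulmxDl mul_copid_mx_pid // addr0 pid_Stil Stil_pid.
rewrite /lagP /Jm mul_row_block !mulmx0 !mulmx1 !addr0 !add0r tr_row_mx mul_row_col.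
rewrite E; congr (_ + _); by rewrite -[in RHS]E [in RHS]trmx_mul trmxK.
Qed.

Lemma F2_xx m n (A : 'M[F2]_(m, n)) : A + A = 0.
Proof. by rewrite -{2}(mxF2_opp A) subrr. Qed.

Lemma lagP_lag m r (P : 'M[F2]_m) (S : 'M[F2]_r) : (r <= m)%N -> P \in unitmx ->
  S^T = S -> is_lagrangian (<< lagP P S >>)%MS.
Proof.
move=> rm uP sS; apply/and3P; split.
- by rewrite /is_subspace genmx_id.
- by rewrite mxrank_gen lagP_rank.
apply/forallP => x; apply/forallP => y; apply/implyP => /andP[].
rewrite !genmxE => /submxP[u ->] /submxP[w ->].
rewrite symp_J trmx_mul !mulmxA -(mulmxA u) -(mulmxA _ _ (lagP P S)^T).
by rewrite lagP_J // tr_Stil sS F2_xx mulmx0 mul0mx mxE.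
Qed.

Lemma lagP_injS m r (P : 'M[F2]_m) (S1 S2 : 'M[F2]_r) : (r <= m)%N -> P \in unitmx ->
  lagP P S1 = lagP P S2 -> S1 = S2.
Proof.
move=> rm uP /eq_row_mx [_ E]; apply: (Stil_inj rm).
move: E => /(congr1 (mulmx^~ P)); rewrite !mulmxKV // => /addIr.
by rewrite !pid_Stil.
Qed.


Lemma pidPT_H m r (H : 'M[F2]_m) : \rank H = r ->
  ((pid_mx r : 'M[F2]_m) *m (PI r H)^T == H)%MS.
Proof.
move=> rH; have rm : (r <= m)%N by rewrite -rH rank_leq_col.
have [uP XE] := PI_facts rH; have /andP[_ /andP[XH HX]] := HI_spec rH.
apply/andP; split.
  apply: submx_trans XH.
  by rewrite XE -(@pid_mx_id _ m r m r) // -mulmxA submxMl.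
apply: submx_trans HX _.
by rewrite XE -(@pid_mx_id _ r m m r) // -mulmxA submxMl.
Qed.

Lemma lag_surjP m r (P : 'M[F2]_m) (L : 'M[F2]_(m + m)) :
  (r <= m)%N -> P \in unitmx -> is_lagrangian L ->
  ((pid_mx r : 'M[F2]_m) *m P^T == lsubmx L)%MS ->
  exists S : 'M[F2]_r, S^T = S /\ (lagP P S == L)%MS.
Proof.
move=> rm uP HL /andP[aA Aa].
set a := (pid_mx r : 'M[F2]_m) *m P^T in aA Aa.
set A := lsubmx L in aA Aa; set B := rsubmx L.
have LAB : L = row_mx A B by rewrite hsubmxK.
have [Y0 aY0] := submxP aA.
pose Y := (pid_mx r : 'M[F2]_m) *m Y0.
have YA : Y *m A = a.
  by rewrite /Y -mulmxA -aY0 /a mulmxA pid_mx_id.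
pose T := Y *m B *m P.
have pT : (pid_mx r : 'M[F2]_m) *m T = T by rewrite /T /Y !mulmxA pid_mx_id.
pose S := \matrix_(i < r, j < r) T (widen_ord rm i) (widen_ord rm j).
have StT : Stil m S = T *m pid_mx r.
  apply/matrixP => i j; rewrite Mpid_E.
  case: (ltnP i r) => ir; case: (ltnP j r) => jr.
  - by rewrite (@Stil_lt _ _ S _ _ (Ordinal ir) (Ordinal jr)) // mxE; congr (T _ _); apply: val_inj.
  - by rewrite Stil_ge // -!leqNgt jr orbT.
  - rewrite Stil_ge; last by rewrite -!leqNgt ir.
    by rewrite -pT pidM_E ltnNge ir.
  - by rewrite Stil_ge // -!leqNgt ir.
have StT' : Stil m S = T *m pid_mx r.
  exact: StT.
set C := copid_mx r *m invmx P.
have CL : (row_mx 0 C <= L)%MS.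
  rewrite (lag_char HL) LAB /Jm mul_row_block !mulmx0 !mulmx1 !addr0 !add0r.
  rewrite tr_row_mx mul_row_col mul0mx addr0.
  have [E AE] := submxP Aa.
  rewrite AE /a trmx_mul trmx_mul trmxK tr_pid_mx /C !mulmxA -(mulmxA _ (invmx P)).
  by rewrite mulVmx // mulmx1 mul_copid_mx_pid // mul0mx.
have NE : lagP P S = Y *m L + (1%:M - T) *m row_mx 0 C.
  rewrite LAB mul_mx_row mul_mx_row mulmx0 add_row_mx addr0 YA /lagP.
  congr (row_mx _ _).
  rewrite pid_Stil StT /C.
  have YB : Y *m B = T *m invmx P by rewrite /T mulmxK.
  rewrite YB mulmxA -mulmxDl; congr (_ *m _).
  rewrite mulmxBl mul1mx /copid_mx mulmxBr mulmx1.
  by rewrite opprB [RHS]addrCA [T + _]addrC subrK addrC.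
have NL : (lagP P S <= L)%MS.
  by rewrite NE addmx_sub ?submxMl // (submx_trans (submxMl _ _) CL).
exists S; split.
  have [D ND] := submxP NL.
  have := lagP_J S rm uP; rewrite {1 2}ND trmx_mul !mulmxA -(mulmxA D) -(mulmxA _ _ L^T).
  rewrite lag_iso // mulmx0 mul0mx => /esym /mxF2_add0.
  by rewrite tr_Stil => /(Stil_inj rm) E; rewrite -E.
case/and3P: HL => _ /eqP rL _.
by rewrite -(mxrank_leqif_eq NL) lagP_rank // rL.
Qed.


Lemma lag_map_in m (t : triple m) : t \in triples m -> lag_map t \in lagrangians m.
Proof.
case: t => r [H S]; rewrite !inE /valid_triple /= => /andP[].
rewrite inE => /andP[_ /eqP rH] /eqP sS.
have rm : (r <= m)%N by rewrite -rH rank_leq_col.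
have [uP _] := PI_facts rH.
by rewrite /lag_map /= lag_mx_P lagP_lag.
Qed.

Lemma lag_map_inj m : {in triples m &, injective (@lag_map m)}.
Proof.
move=> [r1 [H1 S1]] [r2 [H2 S2]]; rewrite !inE /valid_triple /= => /andP[G1 _] /andP[G2 _].
rewrite !inE in G1 G2; case/andP: G1 => /eqP sH1 /eqP rH1; case/andP: G2 => /eqP sH2 /eqP rH2.
rewrite /lag_map /= !lag_mx_P => /genmxP /andP[l12 l21].
have rm1 : (r1 <= m)%N by rewrite -rH1 rank_leq_col.
have [uP1 _] := PI_facts rH1; have [uP2 _] := PI_facts rH2.
have [D1 E1] := submxP l12; have [D2 E2] := submxP l21.
move: (E1) (E2); rewrite /lagP !mul_mx_row => /eq_row_mx [a12 _] /eq_row_mx [a21 _].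
have eH : H1 = H2.
  rewrite -sH1 -sH2; apply/genmxP; apply/andP; split.
    have /andP[_ Ha1] := pidPT_H rH1; have /andP[a2H _] := pidPT_H rH2.
    apply: submx_trans Ha1 _; apply: submx_trans _ a2H; by rewrite a12 submxMl.
  have /andP[_ Ha2] := pidPT_H rH2; have /andP[a1H _] := pidPT_H rH1.
  apply: submx_trans Ha2 _; apply: submx_trans _ a1H; by rewrite a21 submxMl.
subst H2.
have er : r1 = r2 by apply: val_inj => /=; rewrite -rH1 -rH2.
subst r2.
have D1E : D1 = 1%:M.
  have := lagP_K S1 rm1 uP1; rewrite E1 -mulmxA lagP_K // mulmx1 => ->.
  by [].
rewrite D1E mul1mx in E1.
by rewrite (lagP_injS rm1 uP1 E1).
Qed.

Lemma lag_map_onto m : [set lag_map t | t in triples m] = lagrangians m.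
Proof.
apply/setP => L; apply/imsetP/idP => [[t tT ->]|]; first exact: lag_map_in.
rewrite inE => HL.
set A := lsubmx L; set H := (<<A>>)%MS.
pose r := Ordinal (rank_leq_col A : (\rank A < m.+1)%N).
have rH : \rank H = r by rewrite mxrank_gen.
have rm : (r <= m)%N by rewrite -rH rank_leq_col.
have [uP _] := PI_facts rH.
have aA : ((pid_mx r : 'M[F2]_m) *m (PI r H)^T == A)%MS.
  have /andP[aH Ha] := pidPT_H rH.
  by rewrite /H !genmxE in aH Ha; rewrite aH Ha.
have [S [sS NL]] := lag_surjP rm uP HL aA.
exists (Tagged (fun r : 'I_m.+1 => ('M[F2]_m * 'M[F2]_r)%type) (H, S)).
  rewrite !inE /valid_triple /= sS eqxx andbT inE.
  by rewrite /is_subspace genmx_id eqxx /= rH.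
case/and3P: HL => /eqP sL _ _.
rewrite /lag_map /= lag_mx_P -{1}sL; apply/genmxP.
by case/andP: NL => ? ?; apply/andP.
Qed.


Local Close Scope ring_scope.


Definition symD r := {p : 'I_r * 'I_r | (p.2 <= p.1)%N}.

Lemma card_symD r : #|{: symD r}| = r * (r + 1) %/ 2.
Proof.
rewrite card_sig.
have -> : #|[pred p : 'I_r * 'I_r | (p.2 <= p.1)%N]| =
          \sum_(i < r) \sum_(j < r | (j <= i)%N) 1.
  by rewrite pair_big_dep -sum1_card; apply: eq_bigl => p; rewrite inE.
have inner (i : 'I_r) : \sum_(j < r | (j <= i)%N) 1 = i.+1.
  rewrite -(big_mkord (fun j => j <= i)%N (fun _ => 1)).
  rewrite (big_cat_nat (n := i.+1) (leq0n _) (ltn_ord i)) /=.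
  rewrite [X in _ + X]big_nat_cond [X in _ + X]big_pred0 => [|j]; last first.
    by case: (ltnP j i.+1) => //= ij; rewrite [(j <= i)%N]leqNgt ij andbF.
  rewrite big_mkcond /= addn0.
  rewrite (@eq_big_nat _ _ _ 0 i.+1 _ (fun _ => 1)) => [|j /andP[_ ji]]; last by rewrite -ltnS ji.
  by rewrite sum_nat_const_nat subn0 muln1.
rewrite (eq_bigr (fun i : 'I_r => (i + 1)%N)) => [|i _]; last by rewrite inner addn1.
rewrite -(big_mkord xpredT (fun i => (i + 1)%N)) big_split /= bin2_sum sum_nat_const_nat.
rewrite subn0 muln1.
have -> : ('C(r, 2) + r = 'C(r.+1, 2))%N by rewrite binS bin1.
by rewrite bin2 /= divn2 mulnC addn1.
Qed.

Local Open Scope ring_scope.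

Definition phiS r (S : 'M[F2]_r) : {ffun symD r -> F2} := [ffun p => S (val p).1 (val p).2].
Definition psiS r (g : {ffun symD r -> F2}) : 'M[F2]_r :=
  \matrix_(i, j) odflt 0 (omap g (insub (if (j <= i)%N then (i, j) else (j, i)) : option (symD r))).

Lemma card_sym r : #|[set S : 'M[F2]_r | S^T == S]| = (2 ^ (r * (r + 1) %/ 2))%N.
Proof.
have inj : {in [set S : 'M[F2]_r | S^T == S] &, injective (@phiS r)}.
  move=> S1 S2; rewrite !inE => /eqP s1 /eqP s2 E; apply/matrixP => i j.
  wlog ji : i j / (j <= i)%N.
    move=> W; case: (leqP j i) => [|/ltnW ij]; first exact: W.
    by rewrite -[S1]s1 -[S2]s2 !mxE W.
  by move/ffunP: E => /(_ (exist _ (i, j) ji : symD r)); rewrite !ffunE.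
rewrite -(card_in_imset inj).
have -> : [set phiS x | x in [set S : 'M[F2]_r | S^T == S]] = setT.
  apply/setP => g; rewrite inE; apply/imsetP; exists (psiS g).
    rewrite inE; apply/eqP/matrixP => i j; rewrite !mxE.
    by case: (ltngtP i j) => [ij|ij|/val_inj->].
  apply/ffunP => p; rewrite !ffunE /psiS mxE.
  case: p => [[i j] /= ji]; rewrite ji insubT /=.
  by congr (g _); apply: val_inj.
by rewrite cardsT card_ffun card_Fp // card_symD.
Qed.


Local Close Scope ring_scope.


Lemma card_triples m : #|triples m| =
  \sum_(r < m.+1) #|grass m r| * #|[set S : 'M[F2]_r | (S^T == S)%R]|.
Proof.
rewrite -sum1_card.
rewrite (eq_bigl (fun t : triple m => xpredT (tag t) &&
   (fun r (p : 'M[F2]_m * 'M[F2]_r) => (p.1 \in grass m r) && (p.2^T == p.2)%R) (tag t) (tagged t)));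
  last by move=> t; rewrite inE.
rewrite -(@sig_big_dep _ _ _ _ (fun r : 'I_m.+1 => ('M[F2]_m * 'M[F2]_r)%type) xpredT
   (fun r (p : 'M[F2]_m * 'M[F2]_r) => (p.1 \in grass m r) && (p.2^T == p.2)%R)
   (fun r _ => 1)) /=.
apply: eq_bigr => r _.
rewrite -(pair_big (fun H => H \in grass m r) (fun S : 'M[F2]_r => (S^T == S)%R) (fun _ _ => 1)) /=.
rewrite -sum_nat_const; apply: eq_bigr => H _.
by rewrite -sum1_card; apply: eq_bigl => S; rewrite inE.
Qed.


Definition frs r m : {set 'M[F2]_(r, m)} := [set A | \rank A == r].

Lemma card_fr_step r m : #|frs r.+1 m| = #|frs r m| * (2 ^ m - 2 ^ r).
Proof.
rewrite -sum_nat_const /= -sum1_card -[r.+1]add1n.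
rewrite (partition_big dsubmx (fun B => B \in frs r m)) /= => [|A]; last first.
  rewrite !inE -{1}(vsubmxK A); move: {A}(_ A) (_ A) => Ad Au Afull.
  rewrite eqn_leq rank_leq_row -(leq_add2l (\rank Au)) -mxrank_sum_cap.
  rewrite {1 3}[@mxrank]lock addsmxE (eqnP Afull) -lock -addnA.
  by rewrite leq_add ?rank_leq_row ?leq_addr.
apply: eq_bigr => A rAm; rewrite inE in rAm.
rewrite (reindex (col_mx^~ A)) /=; last first.
  exists usubmx => [v _ | vA]; first by rewrite col_mxKu.
  by case/andP=> _ /eqP <-; rewrite vsubmxK.
transitivity #|~: [set (v *m A)%R | v in 'rV[F2]_r]|; last first.
  rewrite cardsCs setCK card_imset ?card_mx ?card_Fp ?mul1n //.
  have [B AB1] := row_freeP rAm; apply: can_inj (mulmx^~ B) _ => v.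
  by rewrite -mulmxA AB1 mulmx1.
rewrite -sum1_card; apply: eq_bigl => v; rewrite !inE col_mxKd eqxx.
rewrite andbT eqn_leq rank_leq_row /= -(leq_add2r (\rank (v :&: A)%MS)).
rewrite -addsmxE mxrank_sum_cap (eqnP rAm) addnAC leq_add2r.
rewrite (ltn_leqif (mxrank_leqif_sup _)) ?capmxSl // sub_capmx submx_refl.
by congr (~~ _); apply/submxP/imsetP=> [] [u]; exists u.
Qed.

Lemma card_fr r m : #|frs r m| = \prod_(i < r) (2 ^ m - 2 ^ i).
Proof.
elim: r => [|r IH].
  rewrite big_ord0 (@eq_card1 _ (0 : 'M[F2]_(0, m))%R) // => A.
  by rewrite [A]flatmx0 !inE mxrank0 !eqxx.
by rewrite card_fr_step IH big_ord_recr.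
Qed.

Lemma base_exists m r (H : 'M[F2]_m) : \rank H = r ->
  exists B : 'M[F2]_(r, m), \rank B = r /\ (B == H)%MS.
Proof.
move=> <-; exists (row_base H); split; first exact: (eqnP (row_base_free H)).
by apply/eqmxP; exact: eq_row_base.
Qed.

Lemma grass_fr m r : #|grass m r| * #|frs r r| = #|frs r m|.
Proof.
rewrite -sum_nat_const -[RHS]sum1_card.
rewrite (partition_big (fun A : 'M[F2]_(r, m) => <<A>>%MS) (fun H => H \in grass m r)) /= => [|A]; last first.
  by rewrite !inE => /eqP rA; rewrite /is_subspace genmx_id eqxx mxrank_gen rA eqxx.
apply: eq_bigr => H; rewrite inE => /andP[/eqP sH /eqP rH].
have [B0 [rB0 /andP[B0H HB0]]] := base_exists rH.
have fB0 : row_free B0 by rewrite /row_free rB0.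
rewrite (reindex (fun g : 'M[F2]_r => (g *m B0)%R)) /=; last first.
  exists (fun A => (A *m pinvmx B0)%R) => [g _ | A]; first by rewrite mulmxKp.
  rewrite inE => /andP[_ /eqP AH]; apply: mulmxKpV.
  by apply: submx_trans HB0; rewrite -AH genmxE.
rewrite -sum1_card; apply: eq_bigl => g; rewrite !inE mxrankMfree //.
case: eqP => //= rg; symmetry; apply/eqP; rewrite -sH; apply/genmxP.
have gH : ((g *m B0)%R <= H)%MS by apply: submx_trans B0H; apply: submxMl.
apply/andP; split; first exact: gH.
by rewrite -(mxrank_leqif_sup gH) mxrankMfree // rg rH.
Qed.


Fixpoint qb m k : nat :=
  match m, k with
  | _, 0 => 1
  | 0, _.+1 => 0
  | m'.+1, k'.+1 => qb m' k'.+1 + 2 ^ (m' - k') * qb m' k'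
  end.

Definition Fr k m := \prod_(i < k) (2 ^ m - 2 ^ i).

Lemma qb_gt m k : m < k -> qb m k = 0.
Proof.
elim: m k => [|m IH] [|k] //= mk.
by rewrite !IH // ?muln0 // ltnW.
Qed.

Lemma Fr_gt k m : m < k -> Fr k m = 0.
Proof. by move=> mk; rewrite /Fr (bigD1 (Ordinal mk)) //= subnn mul0n. Qed.

Lemma FrS k m : Fr k.+1 m = Fr k m * (2 ^ m - 2 ^ k).
Proof. by rewrite /Fr big_ord_recr. Qed.

Lemma FrSS k m : Fr k.+1 m.+1 = 2 ^ k * (2 ^ m.+1 - 1) * Fr k m.
Proof.
rewrite /Fr big_ord_recl /= expn0.
rewrite (eq_bigr (fun i : 'I_k => 2 * (2 ^ m - 2 ^ i))) => [|i _]; last first.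
  by rewrite /bump /= add1n !expnS mulnBr.
by rewrite big_split /= prod_nat_const card_ord mulnA (mulnC (2 ^ m.+1 - 1)).
Qed.

Lemma key_id a b : 1 <= b <= a -> (a - b) + a * (2 * b - 1) = b * (2 * a - 1).
Proof. move=> /andP[b1 ba]; nia. Qed.

Lemma qb_Fr m k : qb m k * Fr k k = Fr k m.
Proof.
elim: m k => [|m IH] [|k].
- by rewrite /Fr !big_ord0.
- by rewrite /= mul0n Fr_gt.
- by rewrite /Fr !big_ord0.
have E1 : qb m k.+1 * Fr k.+1 k.+1 = Fr k m * (2 ^ m - 2 ^ k) by rewrite IH FrS.
have E2 : qb m k * Fr k.+1 k.+1 = 2 ^ k * (2 ^ k.+1 - 1) * Fr k m by rewrite FrSS mulnCA IH.
rewrite /= mulnDl E1 -mulnA E2 FrSS.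
have [km|mk] := leqP k m; last by rewrite Fr_gt // !muln0.
rewrite !mulnA -expnD subnK // (mulnC (Fr k m)) -mulnDl; congr (_ * _).
have b1 : 1 <= 2 ^ k by rewrite expn_gt0.
have ba : 2 ^ k <= 2 ^ m by rewrite leq_exp2l.
by rewrite !expnS key_id // b1 ba.
Qed.

Lemma tri k : (k.+1 * (k.+1 + 1)) %/ 2 = k * (k + 1) %/ 2 + k.+1.
Proof.
have -> : k.+1 * (k.+1 + 1) = k.+1 * 2 + k * (k + 1) by nia.
by rewrite divnMDl // addnC.
Qed.

Lemma qb_sum m : \sum_(r < m.+1) 2 ^ (r * (r + 1) %/ 2) * qb m r =
                 \prod_(1 <= i < m.+1) (2 ^ i + 1).
Proof.
elim: m => [|m IH]; first by rewrite big_ord1 big_geq.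
rewrite big_nat_recr //= -IH.
set T := \sum_(r < m.+1) _.
rewrite big_ord_recl /=.
rewrite (eq_bigr (fun k : 'I_m.+1 => 2 ^ (k.+1 * (k.+1 + 1) %/ 2) * qb m k.+1
          + 2 ^ m.+1 * (2 ^ (k * (k + 1) %/ 2) * qb m k))) => [|k _]; last first.
  rewrite /bump /= add1n mulnDr; congr (_ + _).
  rewrite !mulnA -!expnD tri; congr (2 ^ _ * _).
  have := ltn_ord k; set t := (_ %/ 2)%N; lia.
rewrite big_split /= -big_distrr /= -/T addnA.
have E1 : \sum_(r < m.+2) 2 ^ (r * (r + 1) %/ 2) * qb m r = T.
  by rewrite big_ord_recr /= qb_gt // muln0 addn0.
have E2 : \sum_(r < m.+2) 2 ^ (r * (r + 1) %/ 2) * qb m r =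
          2 ^ ((0 * (0 + 1)) %/ 2) * 1 + \sum_(i < m.+1) 2 ^ (i.+1 * (i.+1 + 1) %/ 2) * qb m i.+1.
  have q0 : qb m 0 = 1 by case: m {IH T E1}.
  by rewrite big_ord_recl q0; congr addn.
rewrite -E2 E1.
by rewrite mulnDr muln1 addnC mulnC.
Qed.


Local Open Scope ring_scope.


Theorem mainTheorem2 (m : nat) :
  {in triples m &, injective (@lag_map m)} /\
  [set lag_map t | t in triples m] = lagrangians m /\
  (#|lagrangians m| = \prod_(1 <= i < m.+1) (2 ^ i + 1))%N /\
  (#|lagrangians m| = \sum_(0 <= r < m.+1) 2 ^ (r * (r + 1) %/ 2) * qbinom2 m r)%N.
Proof.
have cardL : #|lagrangians m| = (\sum_(r < m.+1) 2 ^ (r * (r + 1) %/ 2) * qbinom2 m r)%N.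
  rewrite -lag_map_onto card_in_imset; last exact: lag_map_inj.
  by rewrite card_triples; apply: eq_bigr => r _; rewrite card_sym mulnC.
have qbE r : qbinom2 m r = qb m r.
  have pos : (0 < Fr r r)%N.
    by rewrite /Fr prodn_gt0 // => i; rewrite subn_gt0 ltn_exp2l.
  have Fc k n : Fr k n = #|frs k n| by rewrite card_fr.
  by apply/eqP; rewrite -(eqn_pmul2r pos) qb_Fr /qbinom2 !Fc grass_fr.
split; first exact: lag_map_inj.
split; first exact: lag_map_onto.
split.
  by rewrite cardL -qb_sum; apply: eq_bigr => r _; rewrite qbE.
by rewrite cardL big_mkord.
Qed.
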